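(* Let $X$ be a (real or complex) Banach space, let $K$ be a weak*-compact convex subset of $X^{*}$ and let $B\subseteq K$ be a set that (I)-generates $K$. Let $P:\ell^{\infty}\to\ell^{\infty}$ be a map with $P(0)=0$, and for $n\in\mathbb{N}$ let $P_n:\ell^\infty\to[0,\infty)$ be the map $\mathbf{x}\mapsto |(P\mathbf{x})(n)|$. Suppose that: (i) for each $n$, the map $P_n$ is convex, and it is lower semicontinuous with respect to $\tau_p$ on every bounded subset of $\ell^{\infty}$; (ii) there exists $M\geq 0$ such that $P_n(\mathbf{x}+\mathbf{y})\leq M(P_n\mathbf{x}+P_n\mathbf{y})$ for all $n\in\mathbb{N}$ and all $\mathbf{x},\mathbf{y}\in\ell^{\infty}$; (iii) $P$ is continuous at $0$ with respect to the norm topology of $\ell^{\infty}$. Then for every bounded sequence $\mathbf{x}=(x_n)_{n\in\mathbb{N}}$ in $X$, \[\sup_{x^{*}\in K}\limsup_{n\to\infty}P_n(x^{*}(\mathbf{x}))\leq M\sup_{x^{*}\in B}\limsup_{n\to\infty}P_n(x^{*}(\mathbf{x})),\] where $x^{*}(\mathbf{x})$ denotes the sequence $(x^{*}(x_n))_{n\in\mathbb{N}}\in\ell^\infty$.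
   Context: $\tau_p$ denotes the topology of pointwise (coordinatewise) convergence on $\ell^{\infty}$. For a weak*-compact convex $K\subseteq X^{*}$, a subset $B\subseteq K$ is said to (I)-generate $K$ if whenever $B=\bigcup_{n=1}^{\infty}B_n$ is written as a countable union of subsets, $K$ equals the norm-closure of the convex hull of $\bigcup_{n=1}^{\infty}\overline{\mathrm{co}}^{w^*}(B_n)$, where $\overline{\mathrm{co}}^{w^*}(B_n)$ is the weak*-closed convex hull of $B_n$. *)

(* Defs.v *)
From HB Require Import structures.
From mathcomp Require Import all_boot all_order all_algebra.
From mathcomp Require Import all_classical all_reals all_analysis.
From mathcomp Require Import complex.
Import Order.TTheory GRing.Theory Num.Theory.
Import numFieldNormedType.Exports.

Set Implicit Arguments.
Unset Strict Implicit.
Unset Printing Implicit Defensive.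

Local Open Scope classical_set_scope.
Local Open Scope ring_scope.

(* The scalar field is either R (real case) or R[i] (complex case);
   [toR] converts a (real-valued) scalar such as a norm into R:
   the identity in the real case, the real part in the complex case. *)
Inductive RorC (R : realType) : forall K : numFieldType, (K -> R) -> Prop :=
| RorC_real : @RorC R (R : numFieldType) (fun x : R => x)
| RorC_complex : @RorC R (R[i] : numFieldType) (@complex.Re R).

Arguments RorC : clear implicits.

Section Defs.
Context {K : numFieldType}.

(* Convexity of a set of K-valued functions (functionals, sequences),
   with real coefficients t in [0,1]. *)
Definition convex_fset {T : Type} (C : set (T -> K)) : Prop :=
  forall f g, C f -> C g -> forall t : K, 0 <= t <= 1 ->
    C (fun x => t * f x + (1 - t) * g x).

Definition conv_hull {T : Type} (S : set (T -> K)) : set (T -> K) :=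
  \bigcap_(C in [set C | S `<=` C /\ convex_fset C]) C.

Definition linf_bounded (u : nat -> K) : Prop :=
  exists C : K, forall n, `|u n| <= C.

Definition linf_bounded_set (A : set (nat -> K)) : Prop :=
  exists C : K, forall u, A u -> forall n, `|u n| <= C.

Definition ptws_lsc_on (A : set (nat -> K)) (F : (nat -> K) -> K) : Prop :=
  forall u, A u -> forall c : K, c < F u ->
    \forall v \near (u : {ptws nat -> K}), A v -> c < F v.

Context {X : normedModType K}.

Definition dual : set (X -> K) :=
  [set f | (forall (a : K) (x y : X), f (a *: x + y) = a * f x + f y)
           /\ continuous f].

Definition wstar_closed (D : set (X -> K)) : Prop :=
  exists C : set {ptws X -> K}, closed C /\ D = dual `&` C.

Definition wstar_closed_conv_hull (S : set (X -> K)) : set (X -> K) :=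
  dual `&` \bigcap_(D in [set D | D `<=` dual /\ S `<=` D /\ convex_fset D
                                  /\ wstar_closed D]) D.

(* norm closure in X^* (dual norm: ||g - f|| <= e iff |g x - f x| <= e ||x||) *)
Definition dual_norm_closure (S : set (X -> K)) : set (X -> K) :=
  [set g | dual g /\ forall e : K, 0 < e ->
      exists2 f, S f & forall x : X, `|g x - f x| <= e * `|x|].

Definition I_generates (Kset B : set (X -> K)) : Prop :=
  forall Bn : nat -> set (X -> K), B = \bigcup_n Bn n ->
    Kset = dual_norm_closure
             (conv_hull (\bigcup_n wstar_closed_conv_hull (Bn n))).

End Defs.

(* Main.v *)
Require Import Defs.
From HB Require Import structures.
From mathcomp Require Import all_boot all_order all_algebra.
From mathcomp Require Import all_classical all_reals all_analysis.
From mathcomp Require Import complex.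
From mathcomp Require Import ring lra.
Import Order.TTheory GRing.Theory Num.Theory.
Import numFieldNormedType.Exports.
Local Open Scope classical_set_scope.
Local Open Scope ring_scope.

Lemma toR_props (R : realType) (K : numFieldType) (toR : K -> R) : RorC R K toR ->
 (forall a b, toR (a+b) = toR a + toR b) /\
 (forall a b : K, a <= b -> toR a <= toR b) /\
 (forall a b : K, a < b -> toR a < toR b) /\
 (forall a b : K, 0 <= a -> toR (a*b) = toR a * toR b) /\
 toR 1 = 1 /\
 exists emb : R -> K, (forall r, toR (emb r) = r) /\ (forall r, 0 < r -> 0 < emb r) /\
   (forall r b, 0 <= b -> r < toR b -> emb r < b) /\
   (forall r b, 0 <= b -> toR b <= r -> b <= emb r) /\
   (forall r, 0 <= r -> 0 <= emb r).
Proof.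
case.
  do 5 (split => //).
  by exists id; do 3 (split => //).
split; first by move=> [a1 a2] [b1 b2].
split; first by move=> a b; rewrite lecE => /andP[].
split; first by move=> a b; rewrite ltcE => /andP[].
split.
  move=> [a1 a2] [b1 b2]; rewrite lecE /= => /andP[/eqP -> _].
  by simpc.
split => //.
exists (fun r => (r%:C)%C); split => //; split.
  by move=> r; rewrite ltcR.
split.
  move=> r [b1 b2]; rewrite lecE /= => /andP[/eqP -> _] hr.
  by rewrite ltcE /= eqxx hr.
split.
  move=> r [b1 b2]; rewrite lecE /= => /andP[/eqP -> _] hr.
  by rewrite lecE /= eqxx hr.
by move=> r r0; rewrite lecR.
Qed.

Lemma comp_cont (T : eqType) (K : topologicalType) (x : nat -> T) :
  continuous (fun g : {ptws T -> K} => ((fun n => g (x n)) : {ptws nat -> K})).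
Proof.
move=> g; apply/cvg_sup; first by apply: fmap_filter; apply: nbhs_filter. move=> i.
have := @continuous_comp_initial _ _ _ (@proj nat (fun _ => K) i)
   (fun g : {ptws T -> K} => ((fun n => g (x n)) : {ptws nat -> K})).
apply.
exact: (@proj_continuous T (fun _ => K) (x i)).
Qed.

Lemma closed_C (R : realType) (K : numFieldType) (toR : K -> R) (T : eqType) (x : nat -> T)
 (Q : (nat -> K) -> nat -> K) (kk : K) (kkr : kk \is Num.real) (k : nat) (r : R) (emb : R -> K)
 (Hemb : forall b, 0 <= b -> r < toR b -> emb r < b)
 (Hemb2 : toR (emb r) = r)
 (Hlt : forall a b, a < b -> toR a < toR b)
 (Q0 : forall u n, 0 <= Q u n)
 (Hlsc : forall n, ptws_lsc_on [set u | forall m, `|u m| <= kk] (fun u => Q u n)) :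
 closed ([set g : {ptws T -> K} | (forall m, `|g (x m)| <= kk) /\
    forall n, (k <= n)%N -> toR (Q (fun m => g (x m)) n) <= r]).
Proof.
move=> g gcl.
have H1 : forall m, `|g (x m)| <= kk.
  move=> m; rewrite real_leNgt ?normr_real //; apply/negP => hlt.
  have hcv := @proj_continuous T (fun _ => K) (x m) g.
  have epos : 0 < `|g (x m)| - kk by rewrite subr_gt0.
  have := @cvgr_dist_lt K K _ _ _ (proj (x m)) (g (x m)) hcv _ epos.
  move=> hnb; have [h [[hC _] hn]] := gcl _ (hnb (nbhs_filter g)).
  have := hC m; apply/negP; rewrite -real_ltNge ?normr_real //.
  have hle : `|g (x m)| <= `|g (x m) - h (x m)| + `|h (x m)|.
    by rewrite -{1}(subrK (h (x m)) (g (x m))) ler_normD.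
  rewrite /proj in hn.
  rewrite -(ltrD2r `|g (x m) - h (x m)|).
  apply: (lt_le_trans (y := kk + (`|g (x m)| - kk))); first by rewrite ltrD2l.
  by rewrite addrC subrK addrC.
split; first exact: H1.
move=> n kn; rewrite leNgt; apply/negP => hlt.
have hc : emb r < Q (fun m => g (x m)) n by apply: Hemb => //.
have := Hlsc n (fun m => g (x m)) H1 (emb r) hc.
move=> /(@comp_cont T K x g) hnb.
have [h [[hC1 hC2] hn]] := gcl _ hnb.
have := hC2 n kn; apply/negP; rewrite -ltNge -{1}Hemb2.
by apply: Hlt; apply: hn.
Qed.

Lemma esup_le (R : realType) (u : nat -> \bar R) (a : \bar R) (k : nat) :
  (forall n, (k <= n)%N -> (u n <= a)%E) -> (limn_esup u <= a)%E.
Proof.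
move=> h; rewrite /limn_esup limf_esupE.
apply: ge_ereal_inf; exists (ereal_sup (u @` [set n | (k <= n)%N])).
  by exists [set n | (k <= n)%N] => //; exists k.
by apply: ge_ereal_sup => _ [n kn <-]; apply: h.
Qed.

Lemma esup_lt (R : realType) (u : nat -> \bar R) (a : \bar R) :
  (limn_esup u < a)%E -> exists k, forall n, (k <= n)%N -> (u n < a)%E.
Proof.
rewrite /limn_esup limf_esupE => /ereal_inf_lt [_ [V [N _ hN] <-] hlt].
exists N => n Nn; apply: le_lt_trans hlt.
by apply: ereal_sup_ubound; exists n => //; apply: hN.
Qed.

Lemma esup_ge0 (R : realType) (u : nat -> \bar R) :
  (forall n, 0 <= u n)%E -> (0 <= limn_esup u)%E.
Proof.
by move=> h; apply: limf_esup_ge0.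
Qed.

Lemma dual_bounded (K : numFieldType) (X : normedModType K) (f : X -> K)
  (x : nat -> X) (C : K) :
  dual f -> (forall n, `|x n| <= C) -> exists2 B : K, 0 <= B & forall n, `|f (x n)| <= B.
Proof.
move=> [lin cont] hC.
have C0 : 0 <= C by apply: le_trans (hC 0%N).
have f0 : f 0 = 0.
  have h := lin 1 0 0; rewrite scaler0 addr0 mul1r in h.
  by have := congr1 (fun z => z - f 0) h; rewrite subrr addrK => <-.
have fs : forall (s : K) y, f (s *: y) = s * f y.
  by move=> s y; have := lin s y 0; rewrite addr0 f0 addr0.
have := @cvgr_dist_lt K K _ _ _ f (f 0) (cont 0).
rewrite f0 => /(_ (nbhs_filter _) 1 ltr01).
move=> /nbhs_norm0P [/= e e0 he].
set C' := C + 1.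
have C'0 : 0 < C' by rewrite /C' ltr_wpDl.
exists (2 * C' / e); first by rewrite ltW // divr_gt0 // mulr_gt0.
move=> n.
set s := e / (2 * C').
have s0 : 0 < s by rewrite divr_gt0 // mulr_gt0.
have hy : `|s *: x n| < e.
  rewrite normrZ gtr0_norm //.
  apply: (le_lt_trans (y := s * C')).
    by rewrite ler_pM2l // (le_trans (hC n)) // /C' lerDl.
  rewrite /s invfM mulrA mulfVK ?gt_eqF //.
  by rewrite ltr_pdivrMr // ltr_pMr // ltr1n.
have := he _ hy; rewrite sub0r normrN fs normrM gtr0_norm //.
have -> : 2 * C' / e = s^-1 by rewrite /s invf_div.
by move=> h; rewrite ltW // -(ltr_pM2l s0) mulfV ?gt_eqF.
Qed.

Lemma dual_conv (K : numFieldType) (X : normedModType K) (f g : X -> K) (t : K) :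
  dual f -> dual g -> dual (fun y => t * f y + (1 - t) * g y).
Proof.
move=> [lf cf] [lg cg]; split.
  move=> a y z; rewrite lf lg.
  by rewrite !mulrDr !mulrA [t * a]mulrC [(1 - t) * a]mulrC -!mulrA; ring.
move=> y; apply: cvgD; apply: cvgM; [exact: cvg_cst|exact: cf|exact: cvg_cst|exact: cg].
Qed.

Theorem theorem3p1 (R : realType) (K : numFieldType) (toR : K -> R)
  (hK : RorC R K toR)
  (X : completeNormedModType K) (Kset B : set (X -> K))
  (hKdual : Kset `<=` dual)
  (hKcomp : compact (Kset : set {ptws X -> K}))
  (hKconv : convex_fset Kset)
  (hBK : B `<=` Kset) (hBgen : I_generates Kset B)
  (P : (nat -> K) -> (nat -> K))
  (hPlinf : forall u, linf_bounded u -> linf_bounded (P u))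
  (hP0 : P (fun _ => 0) = (fun _ => 0))
  (hconv : forall (n : nat) (u v : nat -> K), linf_bounded u -> linf_bounded v ->
     forall t : K, 0 <= t <= 1 ->
     `|P (fun i => t * u i + (1 - t) * v i) n| <= t * `|P u n| + (1 - t) * `|P v n|)
  (hlsc : forall (n : nat) (A : set (nat -> K)), linf_bounded_set A ->
     ptws_lsc_on A (fun u => `|P u n|))
  (M : K) (hM : 0 <= M)
  (hquasi : forall (n : nat) (u v : nat -> K), linf_bounded u -> linf_bounded v ->
     `|P (fun i => u i + v i) n| <= M * (`|P u n| + `|P v n|))
  (hcont : forall e : K, 0 < e -> exists2 d : K, 0 < d &
     forall u, linf_bounded u -> (forall i, `|u i| <= d) -> forall i, `|P u i| <= e) :
  forall x : nat -> X, (exists C : K, forall n, `|x n| <= C) ->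
  (ereal_sup [set limn_esup (fun n => (toR `|P (fun m => f (x m)) n|)%:E) | f in Kset]
   <= (toR M)%:E *
      ereal_sup [set limn_esup (fun n => (toR `|P (fun m => f (x m)) n|)%:E) | f in B])%E.

Proof.
move=> x [C hC].
have [tD [tle [tlt [tM [t1 [emb [e1 [e2 [e3 [e4 e5]]]]]]]]]] := @toR_props R K toR hK.
have t0 : toR 0 = 0.
  have h := tD 0 0; rewrite addr0 in h.
  by have := congr1 (fun z => z - toR 0) h; rewrite subrr addrK => <-.
have tge0 : forall a, 0 <= a -> 0 <= toR a by move=> a /tle; rewrite t0.
have C0 : 0 <= C by apply: le_trans (hC 0%N).
set L := fun f : X -> K => limn_esup (fun n => (toR `|P (fun m => f (x m)) n|)%:E).
set E := ereal_sup [set L f | f in B].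
have Lge0 : forall f, (0 <= L f)%E.
  by move=> f; apply: esup_ge0 => n; rewrite lee_fin tge0.
have tM0 : 0 <= toR M by apply: tge0.
have claim : forall g, Kset g -> forall r : R, (E < r%:E)%E -> forall d : R, 0 < d ->
    (L g <= (toR M * r + d)%:E)%E.
  move=> g gK r Er d d0.
  set kk := fun k : nat => emb (k%:R).
  set D := fun k : nat => [set f : X -> K | dual f /\ (forall m, `|f (x m)| <= kk k) /\
        forall n, (k <= n)%N -> toR `|P (fun m => f (x m)) n| <= r].
  have kk0 : forall k, 0 <= kk k by move=> k; apply: e5.
  have kkmono : forall i j, (i <= j)%N -> kk i <= kk j.
    by move=> i j ij; apply: e4; [exact: kk0| rewrite e1 ler_nat].
  have Dmono : forall i j, (i <= j)%N -> D i `<=` D j.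
    move=> i j ij f [df [fb fP]]; split => //; split.
      by move=> m; apply: le_trans (fb m) (kkmono _ _ ij).
    by move=> n jn; apply: fP; apply: leq_trans jn.
  have Dconv : forall k, convex_fset (D k).
    move=> k f h [df [fb fP]] [dh [hb hP]] t ht.
    have /andP[t0' t1'] := ht.
    have t1p : 0 <= 1 - t by rewrite subr_ge0.
    split; first exact: dual_conv.
    split.
      move=> m; apply: le_trans (ler_normD _ _) _.
      rewrite !normrM (ger0_norm t0') (ger0_norm t1p).
      apply: le_trans (_ : t * kk k + (1 - t) * kk k <= _).
        by apply: lerD; apply: ler_wpM2l.
      by rewrite -mulrDl addrC subrK mul1r.
    move=> n kn.
    have fbd : linf_bounded (fun m => f (x m)) by exists (kk k).
    have hbd : linf_bounded (fun m => h (x m)) by exists (kk k).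
    have := hconv n _ _ fbd hbd t ht.
    move=> /tle; rewrite tD !tM // => hle; apply: le_trans hle _.
    have ht1 : toR t + toR (1 - t) = 1 by rewrite -tD addrC subrK t1.
    apply: le_trans (_ : toR t * r + toR (1 - t) * r <= _).
      by apply: lerD; apply: ler_wpM2l; [apply: tge0 | apply: fP | apply: tge0 | apply: hP].
    by rewrite -mulrDl ht1 mul1r.
  set Bn := fun k => B `&` D k.
  have hBU : B = \bigcup_k Bn k.
    apply/seteqP; split => [b bB|b [k _ [bB _]] //].
    have db := hKdual b (hBK b bB).
    have [be be0 hbe] := @dual_bounded _ _ b x C db hC.
    have Lb : (L b < r%:E)%E by apply: le_lt_trans Er; apply: ereal_sup_ubound; exists b.
    have [k1 hk1] := @esup_lt R _ _ Lb.
    set k2 := Num.bound (toR be).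
    exists (maxn k1 k2) => //; split => //; split => //; split.
      move=> m; apply: le_trans (hbe m) _; apply: e4 => //.
      apply: le_trans (ltW (archi_boundP (tge0 _ be0))) _.
      by rewrite ler_nat leq_maxr.
    move=> n kn; rewrite -lee_fin; apply: ltW; apply: hk1; apply: leq_trans kn.
    exact: leq_maxl.
  have hK' := hBgen Bn hBU.
  have hull : forall k, wstar_closed_conv_hull (Bn k) `<=` D k.
    move=> k f [df hf]; apply: hf; split.
      by move=> h [].
    split; first by move=> h [].
    split; first exact: Dconv.
    exists [set g : {ptws X -> K} | (forall m, `|g (x m)| <= kk k) /\
       forall n, (k <= n)%N -> toR `|P (fun m => g (x m)) n| <= r].
    split.
      apply: (@closed_C R K toR X x (fun u n => `|P u n|) (kk k) _ k r emb).
       - by apply: ger0_real.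
       - by move=> b b0 hb; apply: e3.
       - exact: e1.
       - exact: tlt.
       - by move=> u n; exact: normr_ge0.
       - by move=> n; apply: hlsc; exists (kk k) => u hu.
    by apply/seteqP; split => h /=; [move=> [dh [? ?]]; split | move=> [dh [? ?]]].
  have Uconv : convex_fset (\bigcup_k D k).
    move=> f h [i _ fi] [j _ hj] t ht; exists (maxn i j) => //.
    apply: Dconv => //; [apply: (Dmono i) => //; exact: leq_maxl |
      apply: (Dmono j) => //; exact: leq_maxr].
  have hullU : conv_hull (\bigcup_n wstar_closed_conv_hull (Bn n)) `<=` \bigcup_k D k.
    move=> f hf; apply: hf; split => //.
    by move=> h [k _ hk]; exists k => //; apply: hull.
  rewrite hK' in gK; case: gK => dg gapprox.
  have M10 : 0 < toR M + 1 by lra.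
  set dd := d / (toR M + 1).
  have [de de0 hde] := hcont (emb dd) (e2 _ (divr_gt0 d0 M10)).
  set C' := C + 1.
  have C'0 : 0 < C' by rewrite /C' ltr_wpDl.
  have [f /hullU [k _ [df [fb fP]]] hgf] := gapprox (de / C') (divr_gt0 de0 C'0).
  apply: (@esup_le _ _ _ k) => n kn; rewrite lee_fin.
  set u := fun m => f (x m).
  set v := fun m => g (x m) - f (x m).
  have ub : linf_bounded u by exists (kk k).
  have vsmall : forall i, `|v i| <= de.
    move=> i; apply: le_trans (hgf (x i)) _.
    apply: le_trans (_ : de / C' * C' <= _).
      apply: ler_wpM2l; first by rewrite ltW // divr_gt0.
      by apply: le_trans (hC i) _; rewrite /C' lerDl.
    by rewrite divfK ?gt_eqF.
  have vb : linf_bounded v by exists de.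
  have := hquasi n u v ub vb.
  have -> : (fun i => u i + v i) = (fun m => g (x m)).
    by apply: funext => i; rewrite /u /v addrC subrK.
  move=> h1.
  have h2 : `|P (fun m => g (x m)) n| <= M * (`|P u n| + emb dd).
    apply: le_trans h1 _; apply: ler_wpM2l => //; apply: lerD => //; exact: hde.
  have := tle _ _ h2; rewrite tM // tD e1 => h3; apply: le_trans h3 _.
  have h4 := fP n kn.
  apply: le_trans (_ : toR M * (r + dd) <= _).
    by apply: ler_wpM2l => //; rewrite lerD2r.
  rewrite mulrDr lerD2l /dd mulrA ler_pdivrMr //.
  by rewrite mulrDr mulr1 mulrC lerDl ltW.
apply: ge_ereal_sup => _ [g gK <-].
have [Mz|Mpos] := eqVneq (toR M) 0.
  rewrite Mz mul0e; apply: (@esup_le _ _ _ 0%N) => n _.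
  rewrite lee_fin.
  have [b b0 hb] := @dual_bounded _ _ g x C (hKdual g gK) hC.
  have gb : linf_bounded (fun m => g (x m)) by exists b.
  have zb : linf_bounded (fun _ : nat => (0 : K)) by exists 0 => i; rewrite normr0.
  have := hquasi n _ _ gb zb.
  have -> : (fun i => g (x i) + 0) = (fun i => g (x i)) by apply: funext => i; rewrite addr0.
  rewrite hP0 normr0 addr0 => /tle; rewrite tM ?Mz ?mul0r //.
have Mp : 0 < toR M by rewrite lt_def Mpos tM0.
case: E claim => [e| |] claim.
- rewrite -EFinM; apply/lee_addgt0Pr => eps eps0.
  have M10 : 0 < toR M + 1 by lra.
  set dd := eps / (toR M + 1).
  have dd0 : 0 < dd by rewrite divr_gt0.
  have hlt : (e%:E < (e + dd)%:E)%E by rewrite lte_fin ltrDl.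
  have := claim g gK (e + dd) hlt dd dd0.
  have -> : toR M * (e + dd) + dd = toR M * e + (toR M + 1) * dd by ring.
  by rewrite /dd [eps / _]mulrC mulrA divff ?gt_eqF // mul1r EFinD.
- by rewrite gt0_muley ?lte_fin // leey.
- have := claim g gK (-2) (ltNyr _) (toR M) Mp.
  have : toR M * -2 + toR M < 0 by lra.
  move=> h1 h2; have := le_trans (Lge0 g) h2; rewrite lee_fin => h3.
  by have := lt_le_trans h1 h3; rewrite ltxx.
Qed.
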